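(* Let $(G,\mathcal{B},\mu,\mathcal{B}_2,\mu_2)$ be an infinite probability group, $\mathcal{H}$ a Hilbert space, and $(e_g)_{g\in G}$ a norm-bounded family in $\mathcal{H}$ such that $(g,h)\mapsto\langle e_g,e_h\rangle$ is measurable as a function on $(G^2,\mathcal{B}_2)$. If for $\mu$-almost every $h\in G$, for $\mu$-almost every $g\in G$, $\langle e_g,e_{gh}\rangle=0$, then for every $f\in\mathcal{H}$, $\langle f,e_g\rangle=0$ for $\mu$-almost every $g\in G$.
   Context: A probability group is a tuple $(G, \mathcal{B}, \mu, \mathcal{B}_2, \mu_2)$ where $G$ is a group, $\mathcal{B}$ and $\mathcal{B}_2$ are $\sigma$-algebras on $G$ and $G^2$ respectively with $\mathcal{B}_2 \supseteq \mathcal{B}\times\mathcal{B}$, $\mu,\mu_2$ are probability measures on $\mathcal{B},\mathcal{B}_2$ with $\mu_2|_{\mathcal{B}\times\mathcal{B}} = \mu\times\mu$, such that: (i) multiplication $(G^2,\mathcal{B}_2)\to(G,\mathcal{B})$ is measurable; (ii) inversion is $\mathcal{B}$-measurable; (iii) $\mu$ is invariant under left translations, right translations and inversion; (iv) Fubini's theorem holds for every $\mathcal{B}_2$-measurable $f:G^2\to\mathbb{R}$: all sections $f(g,\cdot)$, $f(\cdot,g)$ are $\mathcal{B}$-measurable, the partial integrals $g\mapsto\int f(g,h)d\mu(h)$, $g\mapsto\int f(h,g)d\mu(h)$ are $\mathcal{B}$-measurable, and both iterated integrals equal $\int_{G^2} f\,d\mu_2$. ''For $\mu$-almost every $g$,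 $P(g)$'' means the set where $P$ fails is contained in a $\mu$-null set of $\mathcal{B}$. *)

(* Defs.v *)
From HB Require Import structures.
From mathcomp Require Import all_boot all_order all_algebra.
From mathcomp Require Import all_classical all_reals all_analysis measurable_realfun.
From mathcomp Require Import complex.
Set Implicit Arguments. Unset Strict Implicit. Unset Printing Implicit Defensive.
Import Order.TTheory GRing.Theory Num.Theory.
Local Open Scope ring_scope.

Definition is_group (G : Type) (mul : G -> G -> G) (inv : G -> G) (one : G) : Prop :=
  [/\ forall x y z, mul x (mul y z) = mul (mul x y) z,
      forall x, mul one x = x /\ mul x one = x
    & forall x, mul (inv x) x = one /\ mul x (inv x) = one].

Record hilbert_space (R : realType) := HilbertSpace {
  hcarrier :> lmodType R[i];
  hinner : hcarrier -> hcarrier -> R[i];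
  hinner_linl : forall (a : R[i]) (x y z : hcarrier),
      hinner (a *: x + y) z = a * hinner x z + hinner y z;
  hinner_conj : forall x y : hcarrier, hinner y x = Num.conj (hinner x y);
  hinner_ge0 : forall x : hcarrier, 0 <= hinner x x;
  hinner_eq0 : forall x : hcarrier, hinner x x = 0 -> x = 0;
  hcomplete : forall u : nat -> hcarrier,
      (forall eps : R, 0 < eps -> exists N : nat, forall m n : nat,
         (N <= m)%N -> (N <= n)%N ->
         Num.sqrt (complex.Re (hinner (u m - u n) (u m - u n))) < eps) ->
      exists x : hcarrier, forall eps : R, 0 < eps -> exists N : nat,
         forall n : nat, (N <= n)%N ->
         Num.sqrt (complex.Re (hinner (u n - x) (u n - x))) < eps
}.

Definition hnorm (R : realType) (H : hilbert_space R) (x : H) : R :=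
  Num.sqrt (complex.Re (hinner x x)).

(* Main.v *)
Require Import Defs.
From HB Require Import structures.
From mathcomp Require Import all_boot all_order all_algebra.
From mathcomp Require Import all_classical all_reals all_analysis measurable_realfun.
From mathcomp Require Import complex.
From mathcomp Require Import ring lra.
Import Order.TTheory GRing.Theory Num.Theory.
Local Open Scope classical_set_scope.
Local Open Scope ring_scope.

Module Aux.
Set Implicit Arguments. Unset Strict Implicit. Unset Printing Implicit Defensive.


Section Hilb.
Variables (R : realType) (H : hilbert_space R).
Local Notation ip := (@hinner R H).
Definition nr (x : H) : R := complex.Re (ip x x).
Definition sq (z : R[i]) : R := complex.Re z ^+ 2 + complex.Im z ^+ 2.

Lemma ipDl (x y z : H) : ip (x + y) z = ip x z + ip y z.
Proof. have := hinner_linl 1 x y z. rewrite scale1r mul1r. done. Qed.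
Lemma ip0l (z : H) : ip 0 z = 0.
Proof.
have := ipDl 0 0 z; rewrite addr0 => h.
by have := congr1 (fun u => u - ip 0 z) h; rewrite subrr addrK => <-.
Qed.
Lemma ipZl a (x z : H) : ip (a *: x) z = a * ip x z.
Proof. by have := hinner_linl a x 0 z; rewrite addr0 ip0l addr0. Qed.
Lemma ipNl (x z : H) : ip (- x) z = - ip x z.
Proof. by rewrite -scaleN1r ipZl mulN1r. Qed.
Lemma ipBl (x y z : H) : ip (x - y) z = ip x z - ip y z.
Proof. by rewrite ipDl ipNl. Qed.
Lemma ip_suml n (F : 'I_n -> H) z : ip (\sum_(i < n) F i) z = \sum_(i < n) ip (F i) z.
Proof.
elim: n F => [|n IH] F; first by rewrite !big_ord0 ip0l.
by rewrite !big_ord_recr /= ipDl IH.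
Qed.
Lemma conjE (a b : R) : Num.conj (a +i* b)%C = (a -i* b)%C.
Proof. by []. Qed.
Lemma conjD (u v : R[i]) : Num.conj (u + v) = Num.conj u + Num.conj v.
Proof. by case: u v => a b [c d]; rewrite /= !conjE /=; congr (_ +i* _)%C; ring. Qed.
Lemma conjM (u v : R[i]) : Num.conj (u * v) = Num.conj u * Num.conj v.
Proof. by case: u v => a b [c d]; rewrite /= !conjE /=; congr (_ +i* _)%C; ring. Qed.
Lemma conjK (u : R[i]) : Num.conj (Num.conj u) = u.
Proof. by case: u => a b; rewrite /= !conjE /= opprK. Qed.
Lemma conj0 : Num.conj (0 : R[i]) = 0.
Proof. by rewrite /= conjE /= oppr0. Qed.
Lemma ipDr (x y z : H) : ip z (x + y) = ip z x + ip z y.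
Proof. by rewrite hinner_conj ipDl conjD -!hinner_conj. Qed.
Lemma ipZr a (x z : H) : ip z (a *: x) = Num.conj a * ip z x.
Proof. by rewrite hinner_conj ipZl conjM -!hinner_conj. Qed.
Lemma ipNr (x z : H) : ip z (- x) = - ip z x.
Proof. by rewrite -scaleN1r ipZr /= conjE /= oppr0 mulN1r. Qed.
Lemma ipBr (x y z : H) : ip z (x - y) = ip z x - ip z y.
Proof. by rewrite ipDr ipNr. Qed.
Lemma ip0r (z : H) : ip z 0 = 0.
Proof. by rewrite hinner_conj ip0l conj0. Qed.
Lemma ip_sumr n (F : 'I_n -> H) z : ip z (\sum_(i < n) F i) = \sum_(i < n) ip z (F i).
Proof.
elim: n F => [|n IH] F; first by rewrite !big_ord0 ip0r.
by rewrite !big_ord_recr /= ipDr IH.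
Qed.
Lemma nr_ge0 (x : H) : 0 <= nr x.
Proof. by have := hinner_ge0 x; rewrite /nr; case: (ip x x) => a b; rewrite lecE /= => /andP[]. Qed.
Lemma Re_conj (u : R[i]) : complex.Re (Num.conj u) = complex.Re u.
Proof. by case: u. Qed.
Lemma Re_ip_sym (x y : H) : complex.Re (ip y x) = complex.Re (ip x y).
Proof. by rewrite hinner_conj Re_conj. Qed.

Lemma nr_sub (x y : H) (t : R) :
  nr (x - (t%:C)%C *: y) = nr x - 2 * t * complex.Re (ip x y) + t ^+ 2 * nr y.
Proof.
rewrite /nr ipBl !ipBr !ipZl !ipZr (hinner_conj x y).
case: (ip x x) => a b; case: (ip x y) => c d; case: (ip y y) => g h /=.
rewrite /real_complex_def /=. rewrite !(mulr0, mul0r, oppr0, subr0, addr0, mulrN, mulNr, opprK). ring.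
Qed.

Lemma key_ineq (A Q X M2 t : R) : 0 < M2 -> t = M2^-1 -> 0 <= Q ->
  X <= M2 * Q -> 0 <= A - 2 * t * Q + t ^+ 2 * X -> Q <= M2 * A.
Proof.
move=> M0 tE Q0 XQ h.
have tM : t * M2 = 1 by rewrite tE mulVf // gt_eqF.
have t0 : 0 <= t by rewrite tE invr_ge0 ltW.
have h2 : t ^+ 2 * X <= t * Q.
  have -> : t * Q = t ^+ 2 * (M2 * Q) by rewrite expr2 -mulrA (mulrA t M2) tM mul1r.
  by rewrite ler_wpM2l // exprn_ge0.
have h3 : t * Q <= A by lra.
have -> : Q = M2 * (t * Q) by rewrite mulrA (mulrC M2) tM mul1r.
by rewrite ler_wpM2l // ltW.
Qed.

Lemma ip_suml_seq (I : Type) (r : seq I) (F : I -> H) z :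
  ip (\sum_(i <- r) F i) z = \sum_(i <- r) ip (F i) z.
Proof. elim: r => [|x r IH]; by rewrite ?big_nil ?ip0l // !big_cons ipDl IH. Qed.
Lemma ip_sumr_seq (I : Type) (r : seq I) (F : I -> H) z :
  ip z (\sum_(i <- r) F i) = \sum_(i <- r) ip z (F i).
Proof. elim: r => [|x r IH]; by rewrite ?big_nil ?ip0r // !big_cons ipDr IH. Qed.
Lemma Re_sum (I : Type) (r : seq I) (F : I -> R[i]) :
  complex.Re (\sum_(i <- r) F i) = \sum_(i <- r) complex.Re (F i).
Proof. elim: r => [|x r IH]; rewrite ?big_nil // !big_cons -IH. by case: (F x); case: (\sum_(j <- r) F j). Qed.
Lemma sq_ge0 u : 0 <= sq u.
Proof. by rewrite /sq addr_ge0 // sqr_ge0. Qed.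
Lemma Re_conj_mul u : complex.Re (Num.conj u * u) = sq u.
Proof. case: u => a b; rewrite conjE /sq /=. ring. Qed.
Lemma Re_mul3 u z : complex.Re (u * (Num.conj u * z)) = sq u * complex.Re z.
Proof. case: u => a b; case: z => c d; rewrite conjE /sq /=. ring. Qed.
Lemma sq_add u v : sq (u + v) <= 2 * sq u + 2 * sq v.
Proof. case: u => a b; case: v => c d; rewrite /sq /=.
have := sqr_ge0 (a - c); have := sqr_ge0 (b - d); rewrite !expr2; nra. Qed.
Lemma sqr_gt0' {a : R} : a != 0 -> 0 < a ^+ 2.
Proof. by move=> a0; rewrite lt_def expf_neq0 // sqr_ge0. Qed.
Lemma sq_gt0 u : u <> 0 -> 0 < sq u.
Proof.
case: u => a b /= hu; rewrite /sq /=.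
have [a0|a0] := eqVneq a 0; last by have := sqr_gt0' a0; have := sqr_ge0 b; lra.
have [b0|b0] := eqVneq b 0; last by have := sqr_gt0' b0; have := sqr_ge0 a; lra.
by exfalso; apply: hu; rewrite a0 b0.
Qed.

Lemma bessel (s : seq nat) (v : nat -> H) (f : H) (M2 : R) : uniq s -> 0 < M2 ->
  (forall i, nr (v i) <= M2) ->
  (forall i j, i \in s -> j \in s -> i != j -> ip (v i) (v j) = 0) ->
  \sum_(i <- s) sq (ip f (v i)) <= M2 * nr f.
Proof.
move=> us M0 hv orth.
pose c := fun i => ip f (v i).
pose S := \sum_(i <- s) c i *: v i.
have h1 : complex.Re (ip f S) = \sum_(i <- s) sq (c i).
  rewrite /S ip_sumr_seq Re_sum; apply: eq_bigr => i _.
  by rewrite ipZr Re_conj_mul.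
have h2 : nr S = \sum_(i <- s) sq (c i) * nr (v i).
  rewrite /nr {1}/S ip_suml_seq Re_sum; apply: eq_big_seq => i hi.
  rewrite ipZl /S ip_sumr_seq (bigD1_seq i) //= big1_seq ?addr0; last first.
    by move=> j /andP[ji js]; rewrite ipZr orth // ?mulr0 // eq_sym.
  by rewrite ipZr Re_mul3.
have h3 : nr S <= M2 * \sum_(i <- s) sq (c i).
  rewrite h2 mulr_sumr; apply: ler_sum => i _.
  by rewrite [M2 * _]mulrC; apply: ler_wpM2l => //; apply: sq_ge0.
apply: (@key_ineq (nr f) _ (nr S) M2 M2^-1) => //.
  by apply: sumr_ge0 => i _; apply: sq_ge0.
by have := nr_ge0 (f - (M2^-1)%:C%C *: S); rewrite nr_sub h1.
Qed.

Definition span_of {T : Type} (e : T -> H) (s : seq (R[i] * T)) : H :=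
  \sum_(p <- s) p.1 *: e p.2.

Lemma approx (T : Type) (e : T -> H) (M2 : R) (f : H) (eps : R) : 0 < M2 ->
  (forall g, nr (e g) <= M2) -> 0 < eps ->
  exists s, forall g, sq (ip f (e g) - ip (span_of e s) (e g)) <= eps.
Proof.
move=> M0 hM e0.
pose D := [set r | exists s, r = nr (f - span_of e s)].
have hlb : has_lbound D by exists 0 => r [s ->]; apply: nr_ge0.
have hD : has_inf D by split => //; exists (nr (f - span_of e [::])), [::].
have [r [s ->] hr] := inf_adherent (divr_gt0 e0 M0) hD.
exists s => g.
set w := span_of e s; set c := ip f (e g) - ip w (e g).
have cE : c = ip (f - w) (e g) by rewrite ipBl.
pose t := M2^-1.
have hin := ge_inf hlb (ex_intro _ ((t%:C%C * c, g) :: s) erefl).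
have eq1 : f - span_of e ((t%:C%C * c, g) :: s) = (f - w) - t%:C%C *: (c *: e g).
  by rewrite /span_of big_cons /= -/(span_of e s) -/w scalerA opprD addrA addrAC.
rewrite eq1 nr_sub ipZr -cE Re_conj_mul {2}/nr ipZl ipZr Re_mul3 in hin.
have := @key_ineq (nr (f - w) - inf D) (sq c) (sq c * nr (e g)) M2 t M0 erefl (sq_ge0 c).
move=> /(_ _ _) H1.
have H2 : sq c <= M2 * (nr (f - w) - inf D).
  apply: H1; first by rewrite [M2 * _]mulrC; apply: ler_wpM2l => //; apply: sq_ge0.
  lra.
apply: (le_trans H2).
have : nr (f - w) - inf D < eps / M2 by rewrite /w; lra.
move=> /ltW /(ler_wpM2l (ltW M0)); rewrite mulrCA mulfV ?gt_eqF // mulr1.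
by [].
Qed.
End Hilb.

Section Hilb2.
Variables (R : realType) (H : hilbert_space R).
Local Notation ip := (@hinner R H).
Lemma Re_bound (x y : H) : `|complex.Re (ip x y)| <= nr x + nr y.
Proof.
have h1 := nr_ge0 (x - (1%:C)%C *: y); rewrite nr_sub in h1.
have h2 := nr_ge0 (x - ((-1)%:C)%C *: y); rewrite nr_sub in h2.
have h3 := nr_ge0 x; have h4 := nr_ge0 y.
rewrite expr1n in h1; rewrite sqrrN expr1n in h2.
rewrite ler_norml; apply/andP; split; lra.
Qed.
Lemma Im_bound (x y : H) : `|complex.Im (ip x y)| <= nr x + nr y.
Proof.
have := Re_bound x ('i%C *: y).
have -> : complex.Re (ip x ('i%C *: y)) = complex.Im (ip x y).
  by rewrite ipZr; case: (ip x y) => a b; rewrite conjE /=; ring.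
have -> : nr ('i%C *: y) = nr y.
  by rewrite /nr ipZl ipZr; case: (ip y y) => a b; rewrite conjE /=; ring.
by [].
Qed.
Lemma Im_sum (I : Type) (r : seq I) (F : I -> R[i]) :
  complex.Im (\sum_(i <- r) F i) = \sum_(i <- r) complex.Im (F i).
Proof. elim: r => [|x r IH]; rewrite ?big_nil // !big_cons -IH. by case: (F x); case: (\sum_(j <- r) F j). Qed.
End Hilb2.



Section Meas.
Variables (d : measure_display) (T : measurableType d) (R : realType) (mu : probability T R).

Lemma aeP (P : T -> Prop) : {ae mu, forall x, P x} <->
  exists N, [/\ measurable N, mu N = 0 & forall x, ~ N x -> P x].
Proof.
split.
  move=> [N [mN N0 sub]]; exists N; split => // x Nx.
  by apply: contrapT => nP; exact: Nx (sub x nP).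
move=> [N [mN N0 h]]; exists N; split => // x /= nP.
by apply: contrapT => Nx; apply: nP; apply: h.
Qed.

Lemma negl_fin n (F : nat -> set T) : (forall i, (i < n)%N -> mu.-negligible (F i)) ->
  mu.-negligible [set x | exists i, (i < n)%N /\ F i x].
Proof.
elim: n => [|n IH] hF.
  by apply: (negligibleS _ (negligible_set0 mu)) => x [i []].
apply: (negligibleS _ (negligibleU (IH _) (hF n _))) => //.
- move=> x [i [ilt Fi]]; rewrite ltnS leq_eqVlt in ilt.
  case/orP: ilt => [/eqP Ein|ilt]; [by right; rewrite -Ein | by left; exists i].
- by move=> i ilt; apply: hF; apply: ltnW.
Qed.

Lemma exists_notin (A : set T) : mu.-negligible A -> exists x, ~ A x.
Proof.
move=> [N [mN N0 AN]]; apply: contrapT => hn.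
have sub : [set: T] `<=` N.
  move=> x _; apply: AN; apply: contrapT => nA; apply: hn; by exists x.
have h : (mu setT <= mu N)%E := le_measure mu (mem_set measurableT) (mem_set mN) sub.
by move: h; rewrite probability_setT N0 lee_fin ler10.
Qed.
End Meas.

Lemma ae_of_negl d (T : measurableType d) (R : realType) (mu : probability T R) (Q : T -> Prop) :
  mu.-negligible [set x | ~ Q x] -> {ae mu, forall x, Q x}.
Proof. by []. Qed.
Lemma negl_of_ae d (T : measurableType d) (R : realType) (mu : probability T R) (Q : T -> Prop) :
  {ae mu, forall x, Q x} -> mu.-negligible [set x | ~ Q x].
Proof. by []. Qed.

Lemma indic_ge0' (R : realType) (T : Type) (A : set T) (x : T) : 0 <= (\1_A x : R).
Proof. by rewrite indicE ler0n. Qed.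

Section Main.
Variables (R : realType) (d : measure_display) (G : measurableType d)
  (mul : G -> G -> G) (inv : G -> G) (one : G)
  (B2 : set (set (G * G)))
  (mu : probability G R) (mu2 : probability (g_sigma_algebraType B2) R)
  (H : hilbert_space R) (e : G -> H).
Hypothesis hG : is_group mul inv one.
Hypothesis hmul : forall A : set G, measurable A -> B2 [set p | A (mul p.1 p.2)].
Hypothesis hinvm : measurable_fun setT inv.
Hypothesis hL : forall (x : G) (A : set G), measurable A -> mu [set g | A (mul x g)] = mu A.
Hypothesis hR : forall (x : G) (A : set G), measurable A -> mu [set g | A (mul g x)] = mu A.
Hypothesis hFub : forall f : g_sigma_algebraType B2 -> R,
     measurable_fun setT f -> mu2.-integrable setT (fun p => (f p)%:E) ->
     [/\ forall g : G, measurable_fun setT (fun h : G => f (g, h))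
       & forall g : G, measurable_fun setT (fun h : G => f (h, g))] /\
     [/\ measurable_fun setT (fun g : G => (\int[mu]_h (f (g, h))%:E)%E),
         measurable_fun setT (fun g : G => (\int[mu]_h (f (h, g))%:E)%E),
         (\int[mu]_g (\int[mu]_h (f (g, h))%:E) = \int[mu2]_p (f p)%:E)%E
       & (\int[mu]_g (\int[mu]_h (f (h, g))%:E) = \int[mu2]_p (f p)%:E)%E].

Lemma sec_meas (f : g_sigma_algebraType B2 -> R) (K : R) : measurable_fun setT f ->
  (forall p, `|f p| <= K) -> forall g,
  measurable_fun setT (fun h : G => f (g, h)) /\ measurable_fun setT (fun h : G => f (h, g)).
Proof.
move=> mf hK g.
have hi : mu2.-integrable setT (fun p => (f p)%:E).
  apply: measurable_bounded_integrable => //.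
    have h1 : (mu2 setT < +oo)%E by rewrite probability_setT ltry.
    exact: h1.
  rewrite /bounded_near; near=> M. move=> p _ /=; apply: le_trans (hK p) _.
  near: M; apply: nbhs_pinfty_ge; exact: num_real.
by have [[s1 s2] _] := hFub mf hi; split.
Unshelve. all: by end_near.
Qed.

Lemma sec_set (A : set G) : measurable A -> forall x,
  measurable [set g | A (mul x g)] /\ measurable [set g | A (mul g x)].
Proof.
move=> mA x.
pose P := [set p : g_sigma_algebraType B2 | A (mul p.1 p.2)].
have mP : measurable P by apply: sub_sigma_algebra; apply: hmul.
have mi : measurable_fun setT (\1_P : _ -> R) by apply: measurable_indic.
have hb : forall p, `|(\1_P : _ -> R) p| <= 1.
  by move=> p; rewrite indicE; case: (_ \in _); rewrite ?normr1 ?normr0.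
have [h1 h2] := sec_meas mi hb x.
by split; apply/(measurable_indicP R).
Qed.

Lemma mulA' a b c : mul a (mul b c) = mul (mul a b) c.
Proof. by case: hG. Qed.
Lemma mul_cancel g a b : mul (mul g a) (mul (inv a) b) = mul g b.
Proof.
case: hG => hA h1 hV.
by rewrite -hA (hA a) (proj2 (hV a)) (proj1 (h1 b)).
Qed.

Lemma aeR (P : G -> Prop) x : {ae mu, forall g, P g} -> {ae mu, forall g, P (mul g x)}.
Proof.
move=> /aeP [N [mN N0 hN]]; apply/aeP.
exists [set g | N (mul g x)]; split.
- exact: (sec_set mN x).2.
- exact: (etrans (hR _ mN) N0).
- by move=> g Ng; apply: hN.
Qed.

Lemma pts (N0 : set G) : measurable N0 -> mu N0 = 0 -> forall n,
  exists k : nat -> G, forall i j, (i < j)%N -> (j < n)%N -> ~ N0 (mul (inv (k i)) (k j)).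
Proof.
move=> mN0 N00; elim=> [|n [k hk]]; first by exists (fun _ => one) => i j _.
pose F := fun i => [set x | N0 (mul (inv (k i)) x)].
have hF : forall i, (i < n)%N -> mu.-negligible (F i).
  move=> i _; apply/negligibleP; first exact: (sec_set mN0 _).1.
  exact: (etrans (hL _ mN0) N00).
have [x hx] := exists_notin (negl_fin hF).
exists (fun i => if i == n then x else k i) => i j ij jn.
have i_n : (i < n)%N by apply: leq_trans ij _.
rewrite (ltn_eqF i_n).
case: eqP => [_|/eqP jnn].
  by move=> Fx; apply: hx; exists i.
apply: hk => //; rewrite ltnS leq_eqVlt in jn.
by case/orP: jn => // /eqP; move/eqP: jnn.
Qed.

Hypothesis mRe : measurable_fun setT
    (fun p : g_sigma_algebraType B2 => complex.Re (hinner (e p.1) (e p.2))).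
Hypothesis mIm : measurable_fun setT
    (fun p : g_sigma_algebraType B2 => complex.Im (hinner (e p.1) (e p.2))).
Variable M2 : R.
Hypothesis M2pos : 0 < M2.
Hypothesis hM2 : forall g, nr (e g) <= M2.

Lemma mRe_sec h : measurable_fun setT (fun g => complex.Re (hinner (e h) (e g))).
Proof.
have hb : forall p : g_sigma_algebraType B2,
    `|complex.Re (hinner (e p.1) (e p.2))| <= M2 + M2.
  by move=> p; apply: le_trans (Re_bound _ _) _; apply: lerD.
exact: (sec_meas mRe hb h).1.
Qed.
Lemma mIm_sec h : measurable_fun setT (fun g => complex.Im (hinner (e h) (e g))).
Proof.
have hb : forall p : g_sigma_algebraType B2,
    `|complex.Im (hinner (e p.1) (e p.2))| <= M2 + M2.
  by move=> p; apply: le_trans (Im_bound _ _) _; apply: lerD.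
exact: (sec_meas mIm hb h).1.
Qed.

Lemma mspan s : measurable_fun setT (fun g => sq (hinner (span_of e s) (e g))).
Proof.
have E : forall g, hinner (span_of e s) (e g) = \sum_(p <- s) p.1 * hinner (e p.2) (e g).
  by move=> g; rewrite /span_of ip_suml_seq; apply: eq_bigr => p _; rewrite ipZl.
have hRe : measurable_fun setT (fun g => complex.Re (hinner (span_of e s) (e g))).
  have -> : (fun g => complex.Re (hinner (span_of e s) (e g))) = fun g =>
      \sum_(p <- s) (complex.Re p.1 * complex.Re (hinner (e p.2) (e g))
                     - complex.Im p.1 * complex.Im (hinner (e p.2) (e g))).
    apply: funext => g; rewrite E Re_sum; apply: eq_bigr => -[[a b] h] _ /=.
    by case: (hinner (e h) (e g)).
  apply: measurable_sum => p; apply: measurable_funB; apply: measurable_funM.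
  - exact: measurable_cst.
  - exact: mRe_sec.
  - exact: measurable_cst.
  - exact: mIm_sec.
have hIm : measurable_fun setT (fun g => complex.Im (hinner (span_of e s) (e g))).
  have -> : (fun g => complex.Im (hinner (span_of e s) (e g))) = fun g =>
      \sum_(p <- s) (complex.Re p.1 * complex.Im (hinner (e p.2) (e g))
                     + complex.Im p.1 * complex.Re (hinner (e p.2) (e g))).
    apply: funext => g; rewrite E Im_sum; apply: eq_bigr => -[[a b] h] _ /=.
    by case: (hinner (e h) (e g)).
  apply: measurable_sum => p; apply: measurable_funD; apply: measurable_funM.
  - exact: measurable_cst.
  - exact: mIm_sec.
  - exact: measurable_cst.
  - exact: mRe_sec.
by apply: measurable_funD; apply: measurable_funX.
Qed.

Lemma mset_lt (F : G -> R) c : measurable_fun setT F -> measurable [set g | c < F g].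
Proof.
move=> mF.
have := mF measurableT _ (measurable_itv `]c, +oo[).
rewrite setTI.
have -> : F @^-1` [set` `]c, +oo[] = [set g | c < F g].
  by apply/seteqP; split => x /=; rewrite in_itv /= andbT.
by [].
Qed.

Lemma sum_const_iota (c : R) m n : \sum_(i <- iota m n) c = n%:R * c.
Proof.
elim: n m => [|n IH] m; first by rewrite big_nil mul0r.
by rewrite /= big_cons IH -natr1 mulrDl mul1r addrC.
Qed.

Lemma count_le (B : set G) (mB : measurable B) (k : nat -> G) n (K : R) : 0 <= K ->
  {ae mu, forall g, \sum_(i <- iota 0 n) (\1_B (mul g (k i)) : R) <= K} ->
  n%:R * fine (mu B) <= K.
Proof.
move=> K0 hae.
pose Bi i := [set g | B (mul g (k i))].
have mBi i : measurable (Bi i) := (sec_set mB (k i)).2.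
have muBi i : mu (Bi i) = mu B := hR (k i) mB.
have E1 : (\int[mu]_(g in setT) (\sum_(i <- iota 0 n) (\1_(Bi i) g : R)%:E))%E =
    (\sum_(i <- iota 0 n) mu B)%E.
  rewrite ge0_integral_sum //.
  - apply: eq_bigr => i _; rewrite integral_indic // setIT; exact: muBi.
  - by move=> i; apply/measurable_EFinP; apply: measurable_indic.
have E2 : (\int[mu]_(g in setT) (\sum_(i <- iota 0 n) (\1_(Bi i) g : R)%:E) <=
    \int[mu]_(g in setT) (cst K%:E g))%E.
  apply: ae_ge0_le_integral => //.
  all: try (by move=> x _; apply: sume_ge0 => i _; rewrite lee_fin indic_ge0').
  all: try (by apply: emeasurable_sum => i; apply/measurable_EFinP; apply: measurable_indic; exact: mBi).
  all: try (by move=> x _; rewrite lee_fin).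
  all: try exact: measurable_cst.
  move/aeP: hae => [N [mN N0 hN]]; apply/aeP; exists N; split => // x Nx _.
  rewrite sumEFin lee_fin; exact: hN.
have hT : (\int[mu]_(g in setT) (cst K%:E g) = K%:E)%E.
  rewrite integral_cst //.
  have h1 : (K%:E * mu setT = K%:E)%E by rewrite probability_setT mule1.
  exact: h1.
rewrite hT E1 in E2.
have fin : mu B = (fine (mu B))%:E by rewrite fineK // fin_num_measure.
rewrite fin sumEFin lee_fin sum_const_iota in E2.
exact: E2.
Qed.

Variable N0 : set G.
Hypothesis mN0 : measurable N0.
Hypothesis N00 : mu N0 = 0.
Hypothesis hN0 : forall h, ~ N0 h -> {ae mu, forall g, hinner (e g) (e (mul g h)) = 0}.

Lemma orth_ae n (k : nat -> G) :
  (forall i j, (i < j)%N -> (j < n)%N -> ~ N0 (mul (inv (k i)) (k j))) ->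
  {ae mu, forall g, forall i j, (i < j)%N -> (j < n)%N ->
     hinner (e (mul g (k i))) (e (mul g (k j))) = 0}.
Proof.
move=> hk; apply: ae_of_negl.
pose Fij (i j : nat) : set G :=
  [set g | (i < j)%N /\ ~ hinner (e (mul g (k i))) (e (mul g (k j))) = 0].
pose F (i : nat) : set G := [set g | exists j, (j < n)%N /\ Fij i j g].
apply: (negligibleS _ (negl_fin (n:=n) (F:=F) _)).
  move=> g /= hg; apply: contrapT => hn; apply: hg => i j ij jn.
  apply: contrapT => hne; apply: hn; exists i; split; first exact: ltn_trans ij jn.
  by exists j.
move=> i _; apply: (negl_fin (F := Fij i)) => j jn.
have [ij|ji] := ltnP i j; last first.
  by apply: (negligibleS _ (negligible_set0 mu)) => g [/=]; rewrite ltnNge ji.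
have := negl_of_ae (aeR (k i) (hN0 (hk i j ij jn))).
apply: negligibleS => g /= [_ hne]; by rewrite mul_cancel.
Qed.

Lemma neg_r (f : H) (r : R) : 0 < r -> mu.-negligible [set x | r < sq (hinner f (e x))].
Proof.
move=> r0.
have [s hs] := approx f M2pos hM2 (divr_gt0 r0 (ltr0n _ 16)).
set w := span_of e s.
pose B := [set x | r / 4 < sq (hinner w (e x))].
have mB : measurable B by apply: mset_lt; apply: mspan.
have sub1 : [set x | r < sq (hinner f (e x))] `<=` B.
  move=> x /= hx; rewrite /B /=.
  have := sq_add (hinner f (e x) - hinner w (e x)) (hinner w (e x)).
  rewrite subrK; have := hs x; lra.
have sub2 : forall x, B x -> r / 16 < sq (hinner f (e x)).
  move=> x; rewrite /B /= => hx.
  have := sq_add (hinner f (e x)) (- (hinner f (e x) - hinner w (e x))).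
  rewrite opprB addrC subrK.
  have -> : sq (hinner w (e x) - hinner f (e x)) = sq (hinner f (e x) - hinner w (e x)).
    by rewrite /sq; case: (hinner w (e x)) => a1 b1; case: (hinner f (e x)) => c1 d1 /=; ring.
  by have := hs x; lra.
pose K := 16 * M2 * nr f / r.
have K0 : 0 <= K.
  apply: divr_ge0; last exact: ltW.
  by apply: mulr_ge0; [apply: mulr_ge0 => //; exact: ltW | exact: nr_ge0].
have hn : forall n : nat, n%:R * fine (mu B) <= K.
  move=> n; have [k hk] := pts mN0 N00 n.
  apply: (count_le mB) => //.
  move/aeP: (orth_ae hk) => [N [mN N0' hN]]; apply/aeP; exists N; split => // g Ng.
  have horth := hN g Ng.
  have hb := bessel (s := iota 0 n) (v := fun i => e (mul g (k i))) f (iota_uniq 0 n) M2pos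
    (fun i => hM2 _) _.
  have hb' : \sum_(i <- iota 0 n) sq (hinner f (e (mul g (k i)))) <= M2 * nr f.
    apply: hb => i j; rewrite !mem_iota !add0n => /andP[_ ilt] /andP[_ jlt] ij.
    have [lij|lji] := ltnP i j; first exact: horth.
    have lji' : (j < i)%N by rewrite ltn_neqAle eq_sym ij lji.
    by rewrite hinner_conj horth // conj0.
  have hterm : forall i, (\1_B (mul g (k i)) : R) * (r / 16) <= sq (hinner f (e (mul g (k i)))).
    move=> i; rewrite indicE; case: (boolP (_ \in B)) => [/set_mem /sub2 /ltW|_].
      by rewrite mul1r.
    by rewrite mul0r sq_ge0.
  have hsum : (\sum_(i <- iota 0 n) (\1_B (mul g (k i)) : R)) * (r / 16) <= M2 * nr f.
    apply: le_trans hb'; rewrite mulr_suml; apply: ler_sum => i _; exact: hterm.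
  rewrite /K -(ler_pM2r (divr_gt0 r0 (ltr0n _ 16))).
  have -> : 16 * M2 * nr f / r * (r / 16) = M2 * nr f.
    by field; rewrite gt_eqF.
  exact: hsum.
have mB0 : fine (mu B) = 0.
  have m0 : 0 <= fine (mu B) by apply: fine_ge0; apply: measure_ge0.
  apply/eqP; rewrite eq_le m0 andbT; apply: contrapT => /negP; rewrite -ltNge => mpos.
  have := hn (Num.Def.trunc (K / fine (mu B))).+1.
  have := truncnS_gt (K / fine (mu B)).
  rewrite ltr_pdivrMr // => h1 h2; lra.
apply: (negligibleS sub1); apply/negligibleP => //.
have fin : mu B = (fine (mu B))%:E by rewrite fineK // fin_num_measure.
have h0 : mu B = 0 by rewrite fin mB0.
exact: h0.
Qed.

Lemma final (f : H) : {ae mu, forall g, hinner f (e g) = 0}.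
Proof.
apply: ae_of_negl.
apply: (negligibleS _ (negligible_bigcup (F := fun m : nat => [set x | (m.+1%:R)^-1 < sq (hinner f (e x))]) _)).
  move=> x /= hx; have sp := sq_gt0 hx.
  exists (Num.Def.trunc (sq (hinner f (e x)))^-1) => //=.
  rewrite invf_plt ?posrE ?ltr0n //. exact: truncnS_gt.
move=> m; apply: neg_r; by rewrite invr_gt0 ltr0n.
Qed.
End Main.

End Aux.

Theorem mainTheorem7 (R : realType) (d : measure_display) (G : measurableType d)
  (mul : G -> G -> G) (inv : G -> G) (one : G)
  (B2 : set (set (G * G)))
  (mu : probability G R) (mu2 : probability (g_sigma_algebraType B2) R)
  (H : hilbert_space R) (e : G -> H) :
  (* G is a group *)
  is_group mul inv one ->
  (* G is infinite *)
  ~ finite_set [set: G] ->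
  (* B2 is a sigma-algebra on G^2 containing the product sigma-algebra B x B *)
  sigma_algebra setT B2 ->
  (forall A : set (G * G), measurable A -> B2 A) ->
  (* mu2 restricted to B x B is the product measure mu x mu *)
  (forall A : set (G * G), measurable A -> mu2 A = (mu \x mu)%E A) ->
  (* (i) multiplication (G^2, B2) -> (G, B) is measurable *)
  (forall A : set G, measurable A -> B2 [set p | A (mul p.1 p.2)]) ->
  (* (ii) inversion is measurable *)
  measurable_fun setT inv ->
  (* (iii) invariance of mu under left/right translations and inversion *)
  (forall (x : G) (A : set G), measurable A -> mu [set g | A (mul x g)] = mu A) ->
  (forall (x : G) (A : set G), measurable A -> mu [set g | A (mul g x)] = mu A) ->
  (forall A : set G, measurable A -> mu [set g | A (inv g)] = mu A) ->
  (* (iv) Fubini's theorem for (mu2-integrable) B2-measurable functions *)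
  (forall f : g_sigma_algebraType B2 -> R,
     measurable_fun setT f -> mu2.-integrable setT (fun p => (f p)%:E) ->
     [/\ forall g : G, measurable_fun setT (fun h : G => f (g, h))
       & forall g : G, measurable_fun setT (fun h : G => f (h, g))] /\
     [/\ measurable_fun setT (fun g : G => (\int[mu]_h (f (g, h))%:E)%E),
         measurable_fun setT (fun g : G => (\int[mu]_h (f (h, g))%:E)%E),
         (\int[mu]_g (\int[mu]_h (f (g, h))%:E) = \int[mu2]_p (f p)%:E)%E
       & (\int[mu]_g (\int[mu]_h (f (h, g))%:E) = \int[mu2]_p (f p)%:E)%E]) ->
  (* (e_g) is norm-bounded *)
  (exists M : R, forall g : G, hnorm (e g) <= M) ->
  (* (g,h) |-> <e_g, e_h> is B2-measurable (real and imaginary parts) *)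
  measurable_fun setT
    (fun p : g_sigma_algebraType B2 => complex.Re (hinner (e p.1) (e p.2))) ->
  measurable_fun setT
    (fun p : g_sigma_algebraType B2 => complex.Im (hinner (e p.1) (e p.2))) ->
  (* for a.e. h, for a.e. g, <e_g, e_{gh}> = 0 *)
  {ae mu, forall h : G, {ae mu, forall g : G, hinner (e g) (e (mul g h)) = 0}} ->
  forall f : H, {ae mu, forall g : G, hinner f (e g) = 0}.
Proof.
move=> hG _ hB2 _ _ hmul hinvm hL hR hI hFub [M hM] mRe mIm hae f.
pose M2 := M ^+ 2 + 1.
have M2pos : 0 < M2 by rewrite /M2; have := sqr_ge0 M; lra.
have hM2 : forall g, Aux.nr (e g) <= M2.
  move=> g; have := hM g; rewrite /hnorm => hs.
  have n0 := Aux.nr_ge0 (e g).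
  have s0 : 0 <= Num.sqrt (complex.Re (hinner (e g) (e g))) by apply: sqrtr_ge0.
  have : Aux.nr (e g) <= M ^+ 2.
    rewrite -(sqr_sqrtr n0) !expr2.
    exact: (ler_pM s0 s0 hs hs).
  rewrite /M2; lra.
move/Aux.aeP: hae => [N0 [mN0 N00 hN0]].
exact: (Aux.final hG hmul hL hR hFub mRe mIm M2pos hM2 mN0 N00 hN0 f).
Qed.
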